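(* Let $q=1$, $n\in\mathbb N$, let $a<b$ and let $s_0,\dots,s_{2n+1}$ be real numbers such that $H_{1,n},H_{2,n-1},K_{1,n},K_{2,n}$ are positive definite. Then $$\widetilde l_0=\frac{(E^{(2)}_{a,0})^2}{H_{2,0}},\qquad \widetilde m_0=\frac{1}{bs_0-s_1},$$ $$\widetilde l_j=\frac{(\det E^{(2)}_{a,j})^2}{\det H_{2,j}\,\det H_{2,j-1}}\ \ (1\le j\le n-1),\qquad \widetilde m_j=\frac{(\det D^{(3)}_{a,j})^2}{\det K_{1,j}\,\det K_{1,j-1}}\ \ (1\le j\le n).$$
   Context: Let $\widehat s_j:=-ab\,s_j+(a+b)s_{j+1}-s_{j+2}$, $H_{1,j}:=(s_{l+k})_{l,k=0}^j$, $H_{2,j}:=(\widehat s_{l+k})_{l,k=0}^{j}$, $K_{1,j}:=(bs_{l+k}-s_{l+k+1})_{l,k=0}^{j}$, $K_{2,j}:=(-as_{l+k}+s_{l+k+1})_{l,k=0}^j$ (real symmetric $(j+1)\times(j+1)$ matrices). Let $T_0:=0$ and for $j\ge1$ let $T_j$ be the $(j+1)\times(j+1)$ matrix with ones in positions $(l+1,l)$, $l=0,\dots,j-1$, zeros elsewhere; $R_j(x):=(I-xT_j)^{-1}$; $v_j:=(1,0,\dots,0)^{\top}\in\mathbb R^{j+1}$; $u_{2,0}:=-(a+b)s_0+s_1$, $u_{2,j}:=(u_{2,0},-\widehat s_0,\dots,-\widehat s_{j-1})^{\top}$. Scalar DSM parameters: $\lambda_j:=(u_{2,j}+av_js_0)^{\top}R_j(a)^{\top}H_{2,j}^{-1}R_j(a)(u_{2,j}+av_js_0)$,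 $\mu_j:=v_j^{\top}R_j(a)^{\top}K_{1,j}^{-1}R_j(a)v_j$; $\widetilde l_0:=\lambda_0$, $\widetilde l_j:=\lambda_j-\lambda_{j-1}$; $\widetilde m_0:=\mu_0$, $\widetilde m_j:=\mu_j-\mu_{j-1}$. Determinant matrices: with $s^{(3)}_k:=bs_k-s_{k+1}$ and $s^{(2)}_k:=\widehat s_k$, $D^{(3)}_{x,j}$ is the $(j+1)\times(j+1)$ matrix whose rows $0,\dots,j-1$ are $(s^{(3)}_{i},s^{(3)}_{i+1},\dots,s^{(3)}_{i+j})$, $i=0,\dots,j-1$, and whose last row is $(1,x,\dots,x^j)$; $E^{(2)}_{x,j}$ is the $(j+1)\times(j+1)$ matrix whose rows $0,\dots,j-1$ are $(s^{(2)}_{i},\dots,s^{(2)}_{i+j})$, $i=0,\dots,j-1$, and whose last row is $(e_{2,0}(x),\dots,e_{2,j}(x)):=-(u_{2,j}^{\top}+x\,s_0v_j^{\top})R_j(x)^{\top}$. For $j=0$, $E^{(2)}_{a,0}=e_{2,0}(a)=-(u_{2,0}+as_0)$ and $H_{2,0}=\widehat s_0$. *)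

(* Defs.v *)
From HB Require Import structures.
From mathcomp Require Import all_boot all_order all_algebra.
Set Implicit Arguments. Unset Strict Implicit. Unset Printing Implicit Defensive.
Import Order.TTheory GRing.Theory Num.Theory.
Local Open Scope ring_scope.

Section Defs.
Variable R : realFieldType.
Variables (a b : R) (s : nat -> R).

Definition shat (j : nat) : R := - (a * b) * s j + (a + b) * s j.+1 - s j.+2.
Definition s3 (k : nat) : R := b * s k - s k.+1.

Definition H1 (j : nat) : 'M[R]_j.+1 := \matrix_(l, k) s (l + k)%N.
Definition H2 (j : nat) : 'M[R]_j.+1 := \matrix_(l, k) shat (l + k)%N.
Definition K1 (j : nat) : 'M[R]_j.+1 := \matrix_(l, k) (b * s (l + k)%N - s (l + k).+1).
Definition K2 (j : nat) : 'M[R]_j.+1 := \matrix_(l, k) (- a * s (l + k)%N + s (l + k).+1).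

Definition Tm (j : nat) : 'M[R]_j.+1 := \matrix_(l, k) ((l == k.+1 :> nat)%:R).
Definition Rm (j : nat) (x : R) : 'M[R]_j.+1 := invmx (1%:M - x *: Tm j).
Definition vv (j : nat) : 'cV[R]_j.+1 := \col_(i < j.+1) ((i == 0 :> nat)%:R).
Definition u20 : R := - (a + b) * s 0 + s 1.
Definition u2 (j : nat) : 'cV[R]_j.+1 :=
  \col_(i < j.+1) (if (i == 0 :> nat) then u20 else - shat i.-1).

Definition lambda (j : nat) : R :=
  ((u2 j + (a * s 0) *: vv j)^T *m (Rm j a)^T *m invmx (H2 j)
     *m Rm j a *m (u2 j + (a * s 0) *: vv j)) 0 0.
Definition mu (j : nat) : R :=
  ((vv j)^T *m (Rm j a)^T *m invmx (K1 j) *m Rm j a *m vv j) 0 0.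

Definition ltilde (j : nat) : R :=
  if j is j'.+1 then lambda j - lambda j' else lambda 0.
Definition mtilde (j : nat) : R :=
  if j is j'.+1 then mu j - mu j' else mu 0.

Definition D3 (x : R) (j : nat) : 'M[R]_j.+1 :=
  \matrix_(i, k) (if (i < j)%N then s3 (i + k)%N else x ^+ k).
Definition e2 (x : R) (j : nat) : 'rV[R]_j.+1 :=
  - (((u2 j)^T + (x * s 0) *: (vv j)^T) *m (Rm j x)^T).
Definition E2 (x : R) (j : nat) : 'M[R]_j.+1 :=
  \matrix_(i, k) (if (i < j)%N then shat (i + k)%N else e2 x j 0 k).

End Defs.

Definition posdef (R : realFieldType) (m : nat) (M : 'M[R]_m) : Prop :=
  M^T = M /\ forall x : 'cV[R]_m, x != 0 -> 0 < (x^T *m M *m x) 0 0.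

(* Main.v *)
Require Import Defs.
From HB Require Import structures.
From mathcomp Require Import all_boot all_order all_algebra.
From mathcomp Require Import ring.
Set Implicit Arguments. Unset Strict Implicit. Unset Printing Implicit Defensive.
Import Order.TTheory GRing.Theory Num.Theory.
Local Open Scope ring_scope.

Section P2.
Variable R : realFieldType.
Lemma cofactor_eq n (A B : 'M[R]_n) r k :
  (forall i j, i != r -> A i j = B i j) -> cofactor A r k = cofactor B r k.
Proof.
move=> H; rewrite /cofactor; congr (_ * \det _).
apply/matrixP => i j; rewrite !mxE; by apply: H; rewrite eq_sym neq_lift.
Qed.

Lemma invmx_unitE n (A : 'M[R]_n) : \det A != 0 ->
  invmx A = (\det A)^-1 *: \adj A.
Proof. by move=> h; rewrite /invmx unitmxE unitfE h. Qed.

Lemma core m (M : 'M[R]_m.+1) (P : 'M[R]_m) (w : 'cV[R]_m.+1) (w' : 'cV[R]_m) :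
  M^T = M -> \det M != 0 -> \det P != 0 ->
  (forall i k : 'I_m, P i k = M (widen_ord (leqnSn m) i) (widen_ord (leqnSn m) k)) ->
  (forall i : 'I_m, w' i 0 = w (widen_ord (leqnSn m) i) 0) ->
  (w^T *m invmx M *m w) 0 0 - (w'^T *m invmx P *m w') 0 0 =
  (\det (\matrix_(i, k) if (i < m)%N then M i k else w k 0)) ^+ 2 / (\det M * \det P).
Proof.
move=> Msym dM dP HP Hw.
have uM : M \in unitmx by rewrite unitmxE unitfE.
have uP : P \in unitmx by rewrite unitmxE unitfE.
set Mi := invmx M.
have Misym : forall i k, Mi i k = Mi k i.
  have MT : Mi^T = Mi by rewrite /Mi trmx_inv Msym.
  by move=> i k; rewrite -{1}MT mxE.
set N : 'I_m.+1 := ord_max.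
set y := Mi *m w.
set e : 'cV[R]_m.+1 := \col_i (i == N)%:R.
set g := Mi *m e.
set ga := Mi N N.
have gE : forall k, g k 0 = Mi k N.
  move=> k; rewrite /g mxE (bigD1 N) //= mxE eqxx mulr1 big1 ?addr0 // => i iN.
  by rewrite mxE (negbTE iN) mulr0.
have My : M *m y = w by rewrite /y /Mi mulKVmx.
have Mg : M *m g = e by rewrite /g /Mi mulKVmx.
have gaE : ga = \det P / \det M.
  rewrite /ga /Mi invmx_unitE // mxE /adjugate mxE /cofactor.
  have -> : row' N (col' N M) = P.
    apply/matrixP => i k; rewrite !mxE HP; congr (M _ _); apply: val_inj => /=;
    exact: lift_max.
  by rewrite -signr_odd addnn odd_double expr0 mul1r mulrC.
set D := \matrix_(i, k) if (i < m)%N then M i k else w k 0.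
have yNE : y N 0 = \det D / \det M.
  rewrite (expand_det_row D N) /y mxE /Mi invmx_unitE // big_distrl /=.
  apply: eq_bigr => k _.
  rewrite -invmx_unitE // -/Mi Misym /Mi invmx_unitE // !mxE /= ltnn.
  rewrite (@cofactor_eq _ D M); last first.
    move=> i j; rewrite mxE => iN.
    have iN' : (nat_of_ord i != m) := iN.
    by rewrite ltn_neqAle -ltnS ltn_ord andbT iN'.
  by ring.
have ga0 : ga != 0 by rewrite gaE mulf_neq0 // invr_eq0.
set t := y - (y N 0 / ga) *: g.
have tE : forall k, t k 0 = y k 0 - y N 0 / ga * g k 0 by move=> k; rewrite /t !mxE.
have tN : t N 0 = 0 by rewrite tE gE -/ga divfK // subrr.
set t' : 'cV[R]_m := \col_i t (widen_ord (leqnSn m) i) 0.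
have Pt : P *m t' = w'.
  apply/matrixP => i j; rewrite ord1 mxE Hw.
  have : (M *m t) (widen_ord (leqnSn m) i) 0 = w (widen_ord (leqnSn m) i) 0.
    rewrite /t mulmxBr -scalemxAr My Mg !mxE.
    have -> : (widen_ord (leqnSn m) i == N) = false.
      by apply/negbTE; rewrite -val_eqE /= neq_ltn ltn_ord.
    by rewrite mulr0 subr0.
  rewrite mxE big_ord_recr /= -/N tN mulr0 addr0 => <-.
  by apply: eq_bigr => k _; rewrite HP mxE.
have t'E : invmx P *m w' = t' by rewrite -Pt mulKmx.
have lhs1 : (w'^T *m invmx P *m w') 0 0 = (w^T *m t) 0 0.
  rewrite -mulmxA t'E !mxE [in RHS]big_ord_recr /= -/N tN mulr0 addr0.
  by apply: eq_bigr => k _; rewrite !mxE Hw.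
have wg : (w^T *m g) 0 0 = y N 0.
  rewrite [LHS]mxE [RHS]mxE; apply: eq_bigr => k _; rewrite mxE gE Misym mulrC.
  by [].
have lin : forall (A B : 'M[R]_1) c, (A - c *: B) 0 0 = A 0 0 - c * B 0 0.
  by move=> A B c; rewrite !mxE.
rewrite lhs1 /t mulmxBr -scalemxAr lin wg -mulmxA -/y.
rewrite opprB addrC subrK gaE yNE.
by field; rewrite dM dP.
Qed.

Lemma hankel_sym (h : nat -> R) n : (\matrix_(l, k) h (l + k)%N : 'M[R]_n)^T = \matrix_(l, k) h (l + k)%N.
Proof. by apply/matrixP => i k; rewrite !mxE addnC. Qed.

Lemma hankel_det (h : nat -> R) n j : (j <= n)%N ->
  posdef (\matrix_(l, k) h (l + k)%N : 'M[R]_n.+1) ->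
  \det (\matrix_(l, k) h (l + k)%N : 'M[R]_j.+1) != 0.
Proof.
move=> jn [_ pd]; apply/negP => /det0P [v v0 vM].
set V : 'cV[R]_n.+1 := \col_(i < n.+1) (if (i < j.+1)%N then v 0 (inord i) else 0).
have V0 : V != 0.
  apply: contraNneq v0 => V0; apply/eqP/matrixP => r i; rewrite ord1 mxE.
  have hi : (i < n.+1)%N by rewrite (leq_trans (ltn_ord i)).
  have := congr1 (fun A : 'cV_n.+1 => A (Ordinal hi) 0) V0; rewrite !mxE /= ltn_ord.
  by rewrite inord_val.
have := pd V V0.
have -> : (V^T *m \matrix_(l, k) h (l + k)%N *m V) 0 0 = 0.
  rewrite mxE big1 // => k _.
  case: (ltnP k j.+1) => kj; last first.
    have -> : V k 0 = 0 by rewrite mxE ltnNge kj.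
    by rewrite mulr0.
  suff -> : (V^T *m \matrix_(l, k) h (l + k)%N) 0 k = (v *m \matrix_(l, k) h (l + k)%N) 0 (inord k : 'I_j.+1).
    by rewrite vM mxE mul0r.
  rewrite !mxE.
  rewrite [RHS](eq_bigr (fun i : 'I_j.+1 => v 0 (inord i) * h (i + k)%N)); last first.
    by move=> i _; rewrite mxE inord_val inordK.
  rewrite (big_ord_widen n.+1 (fun i => v 0 (inord i) * h (i + k)%N)) //.
  rewrite [RHS]big_mkcond /=; apply: eq_bigr => i _; rewrite !mxE.
  by case: ifP => ij; rewrite ?mul0r.
by rewrite ltxx.
Qed.


Lemma Tp_entry j (x : R) (p : 'cV[R]_j.+1) i :
  ((1%:M - x *: Tm R j) *m p) i 0 = p i 0 - x * (if (0 < i)%N then p (inord i.-1) 0 else 0).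
Proof.
rewrite mulmxBl mul1mx -scalemxAl [LHS]mxE [X in _ + X]mxE [X in - X]mxE; congr (_ - x * _).
rewrite mxE; case: ifP => i0.
  rewrite (bigD1 (inord i.-1)) //= mxE inordK; last by rewrite (leq_ltn_trans (leq_pred i)).
  rewrite prednK // eqxx mul1r big1 ?addr0 // => k kn; rewrite mxE.
  case: eqP => ik; last by rewrite mul0r.
  by case/eqP: kn; apply: val_inj; rewrite /= ik /= inordK.
rewrite big1 // => k _; rewrite mxE.
by case: eqP => ik; [move: i0; rewrite ik | rewrite mul0r].
Qed.

Lemma T_unit j (x : R) : (1%:M - x *: Tm R j) \in unitmx.
Proof.
rewrite unitmxE det_trig; last first.
  apply/is_trig_mxP => i k ik; rewrite !mxE.
  have -> : (i == k) = false by apply/negbTE; rewrite neq_ltn ik.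
  have -> : (i == k.+1 :> nat) = false by apply/negbTE; rewrite neq_ltn (ltn_trans ik).
  by rewrite mulr0 subr0.
rewrite big1 ?unitr1 // => i _; rewrite !mxE eqxx.
by rewrite (ltn_eqF (ltnSn i)) mulr0 subr0.
Qed.

Lemma R_solve j (x : R) (p c : 'cV[R]_j.+1) :
  (1%:M - x *: Tm R j) *m p = c -> Rm j x *m c = p.
Proof. by move=> <-; rewrite /Rm mulKmx // T_unit. Qed.

Lemma R_mul j (x : R) (c : 'cV[R]_j.+1) :
  (1%:M - x *: Tm R j) *m (Rm j x *m c) = c.
Proof. by rewrite /Rm mulKVmx // T_unit. Qed.

Lemma R_restrict j (x : R) (z : 'cV[R]_j.+2) (c' : 'cV[R]_j.+1) :
  (forall i : 'I_j.+1, c' i 0 = ((1%:M - x *: Tm R j.+1) *m z) (widen_ord (leqnSn _) i) 0) ->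
  Rm j x *m c' = \col_i z (widen_ord (leqnSn _) i) 0.
Proof.
move=> Hc; apply: R_solve; apply/matrixP => i r; rewrite ord1 Hc !Tp_entry /= mxE.
case: ifP => // i0; rewrite mxE; congr (_ - x * z _ 0); apply: val_inj.
have h : (i.-1 < j.+1)%N by rewrite (leq_ltn_trans (leq_pred i)).
by rewrite /= !inordK // ltnS ltnW.
Qed.

Lemma Rv_pow j (x : R) : Rm j x *m vv R j = \col_k x ^+ k.
Proof.
apply: R_solve; apply/matrixP => i r; rewrite ord1 Tp_entry !mxE.
case: ifP => i0.
  rewrite inordK ?(leq_ltn_trans (leq_pred i)) // -exprS prednK // subrr.
  by rewrite (gtn_eqF i0).
move/negbT: i0; rewrite -eqn0Ngt => /eqP i0.
by rewrite mulr0 subr0 i0 expr0.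
Qed.


Lemma detNlast m (A B : 'M[R]_m.+1) :
  (forall (i k : 'I_m.+1), (i < m)%N -> B i k = A i k) -> (forall k, B ord_max k = - A ord_max k) ->
  \det B = - \det A.
Proof.
move=> HB HN; rewrite (expand_det_row B ord_max) (expand_det_row A ord_max) -sumrN.
apply: eq_bigr => k _; rewrite HN mulNr (@cofactor_eq _ B A) // => i j iN.
apply: HB; have iN' : (nat_of_ord i != m) := iN.
by rewrite ltn_neqAle -ltnS ltn_ord andbT iN'.
Qed.

Lemma inv11 (A : 'M[R]_1) : invmx A 0 0 = (A 0 0)^-1.
Proof.
case: (boolP (A \in unitmx)) => uA.
  rewrite /invmx uA mxE /adjugate mxE /cofactor det_mx11 /= expr0 mul1r.
  by rewrite det_mx00 mulr1.
rewrite invmx_out //; move: uA; rewrite unitmxE det_mx11 unitfE negbK => /eqP ->.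
by rewrite invr0.
Qed.

Lemma quad11 (X : 'cV[R]_1) (A : 'M[R]_1) : (X^T *m A *m X) 0 0 = X 0 0 * A 0 0 * X 0 0.
Proof. by rewrite mxE big_ord1 mxE big_ord1 !mxE. Qed.

Lemma oppT_entry m (X : 'cV[R]_m) k : (- X^T) 0 k = - X k 0.
Proof. by rewrite !mxE. Qed.

End P2.
Unset Implicit Arguments.

Theorem mainTheorem13 (R : realFieldType) (n : nat) (a b : R) (s : nat -> R) :
  (0 < n)%N -> a < b ->
  posdef (H1 s n) -> posdef (H2 a b s n.-1) ->
  posdef (K1 b s n) -> posdef (K2 a s n) ->
  [/\ ltilde a b s 0 = (E2 a b s a 0 0 0) ^+ 2 / (H2 a b s 0 0 0),
      mtilde a b s 0 = 1 / (b * s 0 - s 1),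
      (forall j : nat, (1 <= j <= n.-1)%N ->
         ltilde a b s j = (\det (E2 a b s a j)) ^+ 2
                          / (\det (H2 a b s j) * \det (H2 a b s j.-1))) &
      (forall j : nat, (1 <= j <= n)%N ->
         mtilde a b s j = (\det (D3 b s a j)) ^+ 2
                          / (\det (K1 b s j) * \det (K1 b s j.-1)))].
Proof.
move=> n0 _ _ pH2 pK1 _.
have dH : forall j, (j <= n.-1)%N -> \det (H2 a b s j) != 0.
  by move=> j hj; exact: (hankel_det (h := shat a b s) hj pH2).
have dK : forall j, (j <= n)%N -> \det (K1 b s j) != 0.
  by move=> j hj; exact: (hankel_det (h := fun t => b * s t - s t.+1) hj pK1).
have sH : forall j, (H2 a b s j)^T = H2 a b s j by move=> j; exact: hankel_sym.
have sK : forall j, (K1 b s j)^T = K1 b s j.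
  by move=> j; exact: (hankel_sym (fun t => b * s t - s t.+1)).
pose zc j := u2 a b s j + (a * s 0) *: vv R j.
pose z j := Rm j a *m zc j.
pose w j := Rm j a *m vv R j.
have lamE : forall j, lambda a b s j = ((z j)^T *m invmx (H2 a b s j) *m z j) 0 0.
  by move=> j; rewrite /lambda -trmx_mul -!mulmxA.
have muE : forall j, mu a b s j = ((w j)^T *m invmx (K1 b s j) *m w j) 0 0.
  by move=> j; rewrite /mu -trmx_mul -!mulmxA.
have e2E : forall j, e2 a b s a j = - (z j)^T.
  by move=> j; rewrite /e2 /z /zc trmx_mul linearD linearZ.
split.
- rewrite /ltilde lamE quad11 inv11 [X in X ^+ 2]mxE /= e2E oppT_entry sqrrN expr2.
  by rewrite mulrAC.
- rewrite /mtilde muE quad11 inv11.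
  have w0 : w 0%N 0 0 = 1 by rewrite /w Rv_pow mxE expr0.
  by rewrite w0 mul1r mulr1 div1r mxE.
- case=> [|j] //= hj.
  rewrite !lamE (@core _ _ _ (H2 a b s j) _ (z j)) //; first last.
  + move=> i.
    have -> : z j = \col_i (z j.+1) (widen_ord (leqnSn _) i) 0.
      by rewrite /z; apply: R_restrict => i'; rewrite R_mul /zc !mxE.
    by rewrite mxE.
  + by move=> i k; rewrite !mxE.
  + exact: dH (ltnW hj).
  + exact: dH.
  rewrite (detNlast (A := \matrix_(i,k) if (i < j.+1)%N then H2 a b s j.+1 i k else z j.+1 k 0)
     (B := E2 a b s a j.+1)) ?sqrrN //.
    by move=> i k ik; rewrite !mxE ik.
  by move=> k; rewrite [LHS]mxE [in RHS]mxE /= ltnn e2E oppT_entry.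
- case=> [|j] //= hj.
  rewrite !muE (@core _ _ _ (K1 b s j) _ (w j)) //; first last.
  + move=> i.
    have -> : w j = \col_i (w j.+1) (widen_ord (leqnSn _) i) 0.
      by rewrite /w; apply: R_restrict => i'; rewrite R_mul !mxE.
    by rewrite mxE.
  + by move=> i k; rewrite !mxE.
  + exact: dK (ltnW hj).
  + exact: dK.
  have -> : D3 b s a j.+1 = \matrix_(i,k) if (i < j.+1)%N then K1 b s j.+1 i k else w j.+1 k 0.
    apply/matrixP => i k; rewrite [LHS]mxE [RHS]mxE; case: ifP => _.
      by rewrite mxE.
    by rewrite /w Rv_pow mxE.
  by [].
Qed.
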